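(* $C_{AD}(3,6)=\log_2 27$.
   Context: There are $n$ nodes labeled $1,\dots,n$ (here $n=3$); node $i$ privately holds an input $x_i\in\{1,\dots,M\}$ (here $M=6$). Communication is over private point-to-point links of a fully connected synchronous network. A deterministic protocol $P$ is a fixed finite schedule of steps $l=1,\dots,L(P)$; in step $l$ a prescribed node $T_l$ sends to a prescribed node $R_l\neq T_l$ one symbol $f_l(x_{T_l},T_l^+(l))$, where $T_l^+(l)$ is the sequence of symbols $T_l$ has received in steps $1,\dots,l-1$; only $R_l$ receives it. Its complexity is $C(P)=\sum_{l}\log_2 S_l(P)$, with $S_l(P)$ the number of distinct values of the step-$l$ symbol over all inputs in $\{1,\dots,M\}^n$. At the end each node $i$ outputs a bit $EQ_i$ depending on $x_i$ and the symbols it received. $P$ solves MEQ-AD$(n,M)$ if for every input, $EQ_1=\cdots=EQ_n=0$ iff $x_1=\cdots=x_n$. $C_{AD}(n,M)$ is the infimum of $C(P)$ over protocols solving MEQ-AD$(n,M)$. *)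

(* Defs.v *)
From mathcomp Require Import all_boot.
From Stdlib Require Import Reals.

Set Implicit Arguments.
Unset Strict Implicit.
Unset Printing Implicit Defensive.

(* A deterministic protocol for n nodes with inputs in 'I_M (value k stands
   for input k+1 in {1,...,M}).  Steps are numbered 0,...,len-1 (step l here
   is step l+1 of the paper).  Symbols are natural numbers (any finite
   alphabet embeds into nat; only the number of distinct values matters). *)
Record protocol (n M : nat) := Protocol {
  len : nat;
  snd : nat -> 'I_n;
  rcv : nat -> 'I_n;
  msg : nat -> 'I_M -> seq nat -> nat;
  out : 'I_n -> 'I_M -> seq nat -> bool
}.

Section Protocols.
Variables (n M : nat).
Implicit Types (P : protocol n M) (x : {ffun 'I_n -> 'I_M}).

Definition well_formed P := forall l, l < len P -> snd P l != rcv P l.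

Definition recv P (i : 'I_n) (t : seq nat) : seq nat :=
  [seq nth 0 t k | k <- iota 0 (size t) & rcv P k == i].

Fixpoint trans P x (l : nat) : seq nat :=
  match l with
  | 0 => [::]
  | l'.+1 => let t := trans P x l' in
             rcons t (msg P l' (x (snd P l')) (recv P (snd P l') t))
  end.

Definition symbol P x (l : nat) : nat := nth 0 (trans P x (len P)) l.

Definition nvals P (l : nat) : nat :=
  size (undup [seq symbol P x l | x <- enum {ffun 'I_n -> 'I_M}]).

Definition log2 (r : R) : R := (ln r / ln 2)%R.

Definition cost P : R := \big[Rplus/0%R]_(l < len P) log2 (INR (nvals P l)).

Definition solves_MEQ_AD P :=
  well_formed P /\
  forall x, (forall i, out P i (x i) (recv P i (trans P x (len P))) = false)
            <-> (forall i j, x i = x j).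

End Protocols.

(* Main.v *)
Require Import Defs.
From mathcomp Require Import all_boot.
From Stdlib Require Import Reals Lra Arith.

Lemma undup_pair (X A B C : eqType) (u : X -> A) (w : X -> B) (c : A -> B -> C) (xs : seq X) :
  size (undup [seq c (u x) (w x) | x <- xs]) <= size (undup (map u xs)) * size (undup (map w xs)).
Proof.
rewrite -(size_allpairs c).
apply: uniq_leq_size; first exact: undup_uniq.
move=> y; rewrite mem_undup => /mapP [x xin ->]; apply: allpairs_f; rewrite mem_undup; exact: map_f.
Qed.

Lemma undup_const (X C : eqType) (c : C) (xs : seq X) : size (undup [seq c | _ <- xs]) <= 1.
Proof.
apply: (@leq_trans (size [:: c])) => //; apply: uniq_leq_size; first exact: undup_uniq.
by move=> y; rewrite mem_undup => /mapP [x _ ->]; rewrite inE.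
Qed.

Lemma undup_map_le (A B : eqType) (k : A -> B) (s : seq A) : size (undup (map k s)) <= size (undup s).
Proof.
rewrite -(size_map k).
apply: uniq_leq_size; first exact: undup_uniq.
by move=> y; rewrite mem_undup => /mapP [x xin ->]; apply: map_f; rewrite mem_undup.
Qed.

Fixpoint seqs (n : nat) : seq (seq nat) :=
  if n is n'.+1 then [seq v :: s | v <- iota 0 6, s <- seqs n'] else [:: [::]].
Definition canon (s : seq nat) :=
  all (fun x => (nth 0 s x <= x) && (nth 0 s (nth 0 s x) == nth 0 s x)) (iota 0 6).
Definition nk (s : seq nat) := size (undup s).
Fixpoint lall {T} (p : T -> bool) s := if s is x :: s' then (if p x then lall p s' else false) else true.
Fixpoint lhas {T} (p : T -> bool) s := if s is x :: s' then (if p x then true else lhas p s') else false.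
Definition i6 := iota 0 6.
Definition tri a b c := lhas (fun x0 => lhas (fun x1 => if nth 0 a x0 == nth 0 a x1 then lhas (fun x2 =>
   if (x0 == x1) && (x1 == x2) then false else if nth 0 b x1 == nth 0 b x2 then nth 0 c x0 == nth 0 c x2 else false) i6 else false) i6) i6.
Definition badp a b := lhas (fun x0 => lhas (fun x1 => if x0 == x1 then false else
   if nth 0 a x0 == nth 0 a x1 then nth 0 b x0 == nth 0 b x1 else false) i6) i6.
Definition check_with (B : nat -> seq (seq nat)) :=
  lall (fun ka => lall (fun a => lall (fun kb => lall (fun b => if badp a b then true else
     lall (fun kc => if 27 <= ka * kb * kc then true else
        lall (fun c => if badp b c then true else if badp a c then true else tri a b c) (B kc)) (iota 1 6))
   (B kb)) (iota 1 6)) (B ka)) (iota 1 6).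
Definition check := let cs := [seq s <- seqs 6 | canon s] in
  let bs := [seq [seq s <- cs | nk s == k] | k <- iota 0 7] in check_with (fun k => nth [::] bs k).
Lemma check_ok : check = true.
Proof. by vm_compute. Qed.

Lemma lall_all T (p : T -> bool) s : lall p s = all p s.
Proof. by elim: s => //= x s ->; case: (p x). Qed.
Lemma lhas_has T (p : T -> bool) s : lhas p s = has p s.
Proof. by elim: s => //= x s ->; case: (p x). Qed.

Lemma mem_seqs n s : size s = n -> all (fun v => v < 6) s -> s \in seqs n.
Proof.
elim: n s => [|n IH] [|v s] //= [hs] /andP [hv hall].
change (v :: s \in [seq v :: s | v <- iota 0 6, s <- seqs n]).
apply: (allpairs_f (fun v s => v :: s)); first by rewrite mem_iota.
exact: IH.
Qed.

Section Comb.
Variables (T : eqType) (f : nat -> T).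
Definition Lf := map f (iota 0 6).
Definition cf := map (fun x => index (f x) Lf) (iota 0 6).

Lemma size_Lf : size Lf = 6.
Proof. by rewrite size_map size_iota. Qed.

Lemma f_in x : x < 6 -> f x \in Lf.
Proof. by move=> hx; apply: map_f; rewrite mem_iota. Qed.

Lemma nth_cf x : x < 6 -> nth 0 cf x = index (f x) Lf.
Proof. by move=> hx; rewrite (nth_map 0) ?size_iota // nth_iota. Qed.

Lemma cf_eq x y : x < 6 -> y < 6 -> (nth 0 cf x == nth 0 cf y) = (f x == f y).
Proof.
move=> hx hy; rewrite !nth_cf //; apply/eqP/eqP => [E|->] //.
by rewrite -(nth_index (f x) (f_in _ hx)) E nth_index // f_in.
Qed.

Lemma cf_eqP x y : x < 6 -> y < 6 -> nth 0 cf x == nth 0 cf y -> f x = f y.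
Proof. by move=> hx hy; rewrite cf_eq // => /eqP. Qed.

Lemma cf_lt x : x < 6 -> nth 0 cf x < 6.
Proof. by move=> hx; rewrite nth_cf // -size_Lf index_mem f_in. Qed.

Lemma cf_canon : canon cf.
Proof.
apply/allP => x; rewrite mem_iota /= add0n => hx.
apply/andP; split.
- rewrite nth_cf //; rewrite leqNgt; apply/negP => /(before_find (f 0)).
  by rewrite (nth_map 0) ?size_iota // nth_iota //= eqxx.
- rewrite (nth_cf _ (cf_lt _ hx)) nth_cf //.
  have hi : index (f x) Lf < 6 by rewrite -size_Lf index_mem f_in.
  have : nth (f 0) Lf (index (f x) Lf) = f x by rewrite nth_index // f_in.
  by rewrite (nth_map 0) ?size_iota // nth_iota // add0n => ->; rewrite eqxx.
Qed.

Lemma cf_seqs : cf \in seqs 6.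
Proof.
apply: mem_seqs; first by rewrite size_map size_iota.
apply/allP => v /mapP [x]; rewrite mem_iota /= add0n => hx ->.
by have := index_mem (f x) Lf; rewrite size_Lf (f_in _ hx).
Qed.

Lemma nk_cf : nk cf <= size (undup Lf).
Proof.
have -> : cf = map (fun v => index v Lf) Lf by rewrite /cf {2}/Lf -map_comp.
exact: undup_map_le.
Qed.

Lemma nk_cf_range : nk cf \in iota 1 6.
Proof.
rewrite mem_iota; apply/andP; split.
  have : nth 0 cf 0 \in undup cf by rewrite mem_undup mem_nth // size_map size_iota.
  by rewrite /nk; case: (undup cf).
apply: (@leq_ltn_trans (size cf)); first exact: size_undup.
by rewrite size_map size_iota.
Qed.
End Comb.
Arguments Lf {T} f.
Arguments cf {T} f.
Arguments nk_cf_range {T} f.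
Arguments nk_cf {T} f.
Arguments cf_eqP {T f x y}.

Lemma in_i6 x : x \in i6 -> x < 6.
Proof. by rewrite mem_iota. Qed.

Lemma badp_sound a b : badp a b = true -> exists x0 x1, [/\ x0 < 6, x1 < 6, x0 != x1,
   nth 0 a x0 == nth 0 a x1 & nth 0 b x0 == nth 0 b x1].
Proof.
rewrite /badp lhas_has => /hasP [x0 /in_i6 hx0]; cbv beta.
rewrite lhas_has => /hasP [x1 /in_i6 hx1]; cbv beta.
case: ifP => // ne; case: ifP => // ea eb.
by exists x0, x1; rewrite ne ea eb.
Qed.

Lemma tri_sound a b c : tri a b c = true -> exists x0 x1 x2, [/\ x0 < 6, x1 < 6, x2 < 6,
   ~~ ((x0 == x1) && (x1 == x2)) & [/\ nth 0 a x0 == nth 0 a x1, nth 0 b x1 == nth 0 b x2 & nth 0 c x0 == nth 0 c x2]].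
Proof.
rewrite /tri lhas_has => /hasP [x0 /in_i6 hx0]; cbv beta.
rewrite lhas_has => /hasP [x1 /in_i6 hx1]; cbv beta.
case: ifP => // ea.
rewrite lhas_has => /hasP [x2 /in_i6 hx2]; cbv beta.
case: ifP => // ne; case: ifP => // eb ec.
by exists x0, x1, x2; rewrite ne ea eb ec.
Qed.

Lemma lallP (T : eqType) (p : T -> bool) (s : seq T) x : x \in s -> lall p s -> p x.
Proof. by move=> hx; rewrite lall_all => /allP; apply. Qed.
Arguments lallP {T p s x}.

Lemma check_sound B : check_with B = true -> forall ka a kb b kc c,
  ka \in iota 1 6 -> a \in B ka -> kb \in iota 1 6 -> b \in B kb -> kc \in iota 1 6 -> c \in B kc ->
  [|| badp a b, 27 <= ka * kb * kc, badp b c, badp a c | tri a b c].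
Proof.
move=> C ka a kb b kc c hka ha hkb hb hkc hc.
move: C; rewrite /check_with => /(lallP hka); cbv beta.
move=> /(lallP ha); cbv beta.
move=> /(lallP hkb); cbv beta.
move=> /(lallP hb); cbv beta.
case: (badp a b) => //; cbv beta iota.
move=> /(lallP hkc); cbv beta.
case: (27 <= ka * kb * kc) => //; cbv beta iota.
move=> /(lallP hc); cbv beta.
by case: (badp b c); case: (badp a c).
Qed.

Lemma comb (T : eqType) (f g h : nat -> T) :
  (forall x0 x1 x2, x0 < 6 -> x1 < 6 -> x2 < 6 -> f x0 = f x1 -> g x1 = g x2 -> h x0 = h x2 ->
     x0 = x1 /\ x1 = x2) ->
  27 <= size (undup (map f (iota 0 6))) * size (undup (map g (iota 0 6))) * size (undup (map h (iota 0 6))).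
Proof.
move=> H.
apply: (@leq_trans (nk (cf f) * nk (cf g) * nk (cf h))); last by rewrite !leq_mul // nk_cf.
pose BS := [seq [seq s <- [seq s <- seqs 6 | canon s] | nk s == k] | k <- iota 0 7].
have hB : forall (U : eqType) (u : nat -> U), cf u \in nth [::] BS (nk (cf u)).
  move=> U u; have := nk_cf_range u; rewrite mem_iota => /andP [_ hk].
  rewrite /BS (nth_map 0) ?size_iota // nth_iota // add0n.
  by rewrite mem_filter eqxx mem_filter cf_canon cf_seqs.
have C : check_with (fun k => nth [::] BS k) = true := check_ok.
have := @check_sound _ C _ _ _ _ _ _ (nk_cf_range f) (hB _ f) (nk_cf_range g) (hB _ g) (nk_cf_range h) (hB _ h).
case/orP => [|/orP [Hp|/orP [|/orP []]]]; last 4 first.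
- exact: Hp.
- case/badp_sound => x0 [x1 [h0 h1 ne ea eb]].
  have [] := H x0 x0 x1 h0 h0 h1 erefl (cf_eqP h0 h1 ea) (cf_eqP h0 h1 eb).
  move=> _ E; case/negP: ne; exact/eqP.
- case/badp_sound => x0 [x1 [h0 h1 ne ea eb]].
  have [] := H x0 x1 x1 h0 h1 h1 (cf_eqP h0 h1 ea) erefl (cf_eqP h0 h1 eb).
  move=> E; case/negP: ne; exact/eqP.
- case/tri_sound => x0 [x1 [x2 [h0 h1 h2 ne [ea eb ec]]]].
  have [] := H x0 x1 x2 h0 h1 h2 (cf_eqP h0 h1 ea) (cf_eqP h1 h2 eb) (cf_eqP h0 h2 ec).
  move=> E1 E2; case/negP: ne; apply/andP; split; apply/eqP; [exact: E1 | exact: E2].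
- case/badp_sound => x0 [x1 [h0 h1 ne ea eb]].
  have [] := H x0 x1 x0 h0 h1 h0 (cf_eqP h0 h1 ea) (esym (cf_eqP h0 h1 eb)) erefl.
  move=> E; case/negP: ne; exact/eqP.
Qed.

Lemma arith6 m1 a1 m2 a2 m3 a3 n p : m1*m2*m3 = n -> a1*a2*a3 <= p -> m1*a1*(m2*a2)*(m3*a3) <= n * p.
Proof.
move=> e h; have -> : m1*a1*(m2*a2)*(m3*a3) = (m1*m2*m3)*(a1*a2*a3) by rewrite -!multE; ring.
by rewrite e leq_mul2l h orbT.
Qed.

Section Exec.
Variable P : protocol 3 6.

Lemma size_trans x l : size (trans P x l) = l.
Proof. by elim: l => //= l IH; rewrite size_rcons IH. Qed.

Lemma recv_rcons i t m : recv P i (rcons t m) =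
  if rcv P (size t) == i then rcons (recv P i t) m else recv P i t.
Proof.
rewrite /recv size_rcons -[(size t).+1]addn1 iotaD add0n filter_cat map_cat.
have -> : [seq nth 0 (rcons t m) k | k <- iota 0 (size t) & rcv P k == i] =
          [seq nth 0 t k | k <- iota 0 (size t) & rcv P k == i].
  apply/eq_in_map => k; rewrite mem_filter mem_iota add0n => /andP [_ /andP [_ hk]].
  by rewrite nth_rcons hk.
rewrite /=; case: (rcv P (size t) == i) => /=.
  by rewrite nth_rcons ltnn eqxx cats1.
by rewrite cats0.
Qed.

Lemma nth_trans x k l : l < k ->
  nth 0 (trans P x k) l = msg P l (x (snd P l)) (recv P (snd P l) (trans P x l)).
Proof.
elim: k => // k IH hl /=.
rewrite nth_rcons size_trans; case: ltnP => h; first exact: IH.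
have e : l = k by apply/eqP; rewrite eqn_leq h -ltnS hl.
by rewrite e eqxx.
Qed.

Lemma symbol_eq x l : l < len P ->
  symbol P x l = msg P l (x (snd P l)) (recv P (snd P l) (trans P x l)).
Proof. exact: nth_trans. Qed.

Definition Dg (v : 'I_6) : {ffun 'I_3 -> 'I_6} := [ffun _ => v].

Lemma sim (x : {ffun 'I_3 -> 'I_6})
  (Hd : forall l, l < len P -> symbol P (Dg (x (snd P l))) l = symbol P (Dg (x (rcv P l))) l) :
  forall k, k <= len P -> forall i, recv P i (trans P x k) = recv P i (trans P (Dg (x i)) k).
Proof.
elim=> [|k IH] hk i //=.
rewrite !recv_rcons !size_trans IH; last exact: ltnW.
case: eqP => // ri; congr rcons.
rewrite IH; last exact: ltnW.
have L1 : symbol P (Dg (x (snd P k))) k =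
   msg P k (x (snd P k)) (recv P (snd P k) (trans P (Dg (x (snd P k))) k)).
  by rewrite symbol_eq // ffunE.
by rewrite -L1 Hd // ri symbol_eq.
Qed.

Definition lk (i j : nat) (l : nat) : bool :=
  ((snd P l == i :> nat) && (rcv P l == j :> nat)) || ((snd P l == j :> nat) && (rcv P l == i :> nat)).

Definition sg (p : pred nat) (L : seq nat) (a : nat) : seq nat :=
  [seq symbol P (Dg (inord a)) l | l <- L & p l].

Definition Acnt {T : eqType} (f : nat -> T) := size (undup (map f (iota 0 6))).

Lemma diag_le l : Acnt (fun a => symbol P (Dg (inord a)) l) <= nvals P l.
Proof.
apply: uniq_leq_size; first exact: undup_uniq.
move=> y; rewrite !mem_undup => /mapP [a _ ->]; apply: map_f; exact: mem_enum.
Qed.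

Lemma sg_bound p l L : Acnt (sg p (l :: L)) <= (if p l then nvals P l else 1) * Acnt (sg p L).
Proof.
rewrite /Acnt /sg /=; case: (p l) => /=; last by rewrite mul1n.
have := @undup_pair nat nat (seq nat) (seq nat) (fun a => symbol P (Dg (inord a)) l)
   (fun a => [seq symbol P (Dg (inord a)) l0 | l0 <- L & p l0]) cons (iota 0 6).
move/leq_trans; apply.
by rewrite leq_mul // diag_le.
Qed.

Lemma link_one l : snd P l != rcv P l -> lk 0 1 l + lk 1 2 l + lk 0 2 l = 1.
Proof.
rewrite /lk; case: (snd P l) => [[|[|[|s]]] hs]; case: (rcv P l) => [[|[|[|r]]] hr] //.
Qed.

Lemma links_bound (wf : well_formed P) L : all (fun l => l < len P) L ->
  Acnt (sg (lk 0 1) L) * Acnt (sg (lk 1 2) L) * Acnt (sg (lk 0 2) L) <= \prod_(l <- L) nvals P l.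
Proof.
elim: L => [|l L IH].
  by rewrite big_nil /Acnt /sg /=.
case/andP=> hl hall; rewrite big_cons.
have one := link_one l (wf _ hl).
have b1 := sg_bound (lk 0 1) l L; have b2 := sg_bound (lk 1 2) l L; have b3 := sg_bound (lk 0 2) l L.
apply: (@leq_trans _ _ _ (leq_mul (leq_mul b1 b2) b3)).
have e : (if lk 0 1 l then nvals P l else 1) * (if lk 1 2 l then nvals P l else 1) *
         (if lk 0 2 l then nvals P l else 1) = nvals P l.
  by move: one; case: (lk 0 1 l); case: (lk 1 2 l); case: (lk 0 2 l); rewrite /= ?muln1 ?mul1n.
exact: arith6 e (IH hall).
Qed.
End Exec.

Lemma lower (P : protocol 3 6) : solves_MEQ_AD P -> 27 <= \prod_(l <- iota 0 (len P)) nvals P l.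
Proof.
case=> wf corr.
have hall : all (fun l => l < len P) (iota 0 (len P)) by apply/allP => l; rewrite mem_iota.
apply: (leq_trans _ (links_bound P wf _ hall)).
apply: comb => x0 x1 x2 h0 h1 h2 e01 e12 e02.
pose x : {ffun 'I_3 -> 'I_6} := [ffun i : 'I_3 => inord (nth 0 [:: x0; x1; x2] i)].
have q : forall p xi xj l, l < len P -> sg P p (iota 0 (len P)) xi = sg P p (iota 0 (len P)) xj -> p l ->
    symbol P (Dg (inord xi)) l = symbol P (Dg (inord xj)) l.
  move=> p xi xj l hl E pl; move/eq_in_map: E; apply.
  by rewrite mem_filter pl mem_iota /= add0n.
have Hd : forall l, l < len P -> symbol P (Dg (x (snd P l))) l = symbol P (Dg (x (rcv P l))) l.
  move=> l hl; rewrite !ffunE.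
  move: (q _ _ _ l hl e01) (q _ _ _ l hl e12) (q _ _ _ l hl e02) (wf l hl).
  rewrite /lk; case: (snd P l) => [[|[|[|s]]] hs]; case: (rcv P l) => [[|[|[|r]]] hr] //= A B C _;
  by [apply: A | apply: esym (A isT) | apply: B | apply: esym (B isT) | apply: C | apply: esym (C isT)].
have R := sim P x Hd (len P) (leqnn _).
have out0 : forall i, out P i (x i) (recv P i (trans P x (len P))) = false.
  move=> i; rewrite R.
  have hc : forall j k, Dg (x i) j = Dg (x i) k by move=> j k; rewrite !ffunE.
  have := (proj2 (corr (Dg (x i)))) hc i.
  by rewrite ffunE.
have E := proj1 (corr x) out0.
have E01 := E (@Ordinal 3 0 isT) (@Ordinal 3 1 isT).
have E12 := E (@Ordinal 3 1 isT) (@Ordinal 3 2 isT).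
rewrite !ffunE /= in E01 E12.
move/(congr1 (@nat_of_ord 6)): E01; move/(congr1 (@nat_of_ord 6)): E12; rewrite !inordK // => -> ->.
Qed.

Lemma log_prod (s : seq nat) (G : nat -> nat) : (forall l, 0 < G l) ->
  \big[Rplus/0%R]_(l <- s) log2 (INR (G l)) = log2 (INR (\prod_(l <- s) G l)).
Proof.
move=> hG; elim: s => [|l s IH].
  by rewrite !big_nil /log2 /= ln_1; unfold Rdiv; ring.
rewrite !big_cons IH mult_INR /log2 ln_mult; first (unfold Rdiv; ring).
  by apply: lt_0_INR; apply/ltP.
apply: lt_0_INR; apply/ltP; rewrite prodn_gt0 //.
Qed.

Lemma nvals_pos (P : protocol 3 6) l : 0 < nvals P l.
Proof.
have : symbol P [ffun _ => ord0] l \in undup [seq symbol P x l | x <- enum {ffun 'I_3 -> 'I_6}].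
  by rewrite mem_undup; apply: map_f; rewrite mem_enum.
by rewrite /nvals; case: (undup _).
Qed.

Lemma cost_prod (P : protocol 3 6) : cost P = log2 (INR (\prod_(l <- iota 0 (len P)) nvals P l)).
Proof.
transitivity (\big[Rplus/0%R]_(0 <= l < len P) log2 (INR (nvals P l))).
  by rewrite /cost big_mkord.
rewrite /index_iota subn0; exact: log_prod (nvals_pos P).
Qed.

Lemma log2_le (a b : nat) : 0 < a -> a <= b -> (log2 (INR a) <= log2 (INR b))%R.
Proof.
move=> ha hab; rewrite /log2 /Rdiv.
apply: Rmult_le_compat_r.
  apply/Rlt_le/Rinv_0_lt_compat; rewrite -ln_1; apply: ln_increasing; lra.
have h0 : (0 < INR a)%R by apply: lt_0_INR; apply/ltP.
have h1 : (INR a <= INR b)%R by apply: le_INR; apply/leP.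
case: (Rle_lt_or_eq_dec _ _ h1) => h.
  by apply/Rlt_le/ln_increasing.
by rewrite h; apply: Rle_refl.
Qed.

Definition o0 : 'I_3 := @Ordinal 3 0 isT.
Definition o1 : 'I_3 := @Ordinal 3 1 isT.
Definition o2 : 'I_3 := @Ordinal 3 2 isT.
Definition sndf (l : nat) : 'I_3 := match l with 0 => o0 | 1 => o1 | _ => o2 end.
Definition rcvf (l : nat) : 'I_3 := match l with 0 => o1 | 1 => o2 | _ => o0 end.
Definition msgf (l : nat) (v : nat) : nat :=
  match l with 0 => v %% 3 | 1 => (v %% 3 + v %/ 3) %% 3 | _ => (v %% 3 + 2 * (v %/ 3)) %% 3 end.
Definition Pu : protocol 3 6 :=
  @Protocol 3 6 3 sndf rcvf (fun l v r => msgf l v)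
   (fun i v r => match (i : nat) with 0 => msgf 2 v != head 0 r
                 | 1 => msgf 0 v != head 0 r | _ => msgf 1 v != head 0 r end).

Lemma Pu_trans x : trans Pu x 3 = [:: msgf 0 (x o0); msgf 1 (x o1); msgf 2 (x o2)].
Proof. by []. Qed.

Lemma key a b c : a < 6 -> b < 6 -> c < 6 ->
  [&& msgf 2 a == msgf 2 c, msgf 0 b == msgf 0 a & msgf 1 c == msgf 1 b] = (a == b) && (b == c).
Proof.
by do 6? case: a => [|a] //; do 6? case: b => [|b] //; do 6? case: c => [|c] //.
Qed.

Lemma Pu_out (x : {ffun 'I_3 -> 'I_6}) (i : 'I_3) : out Pu i (x i) (recv Pu i (trans Pu x (len Pu))) =
  match (i : nat) with 0 => msgf 2 (x o0) != msgf 2 (x o2)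
  | 1 => msgf 0 (x o1) != msgf 0 (x o0) | _ => msgf 1 (x o2) != msgf 1 (x o1) end.
Proof.
rewrite [len Pu]/= Pu_trans.
have e0 : forall H : 0 < 3, Ordinal H = o0 by move=> H; apply: val_inj.
have e1 : forall H : 1 < 3, Ordinal H = o1 by move=> H; apply: val_inj.
have e2 : forall H : 2 < 3, Ordinal H = o2 by move=> H; apply: val_inj.
by case: i => [[|[|[|i]]] Hi] //=; rewrite /recv /= ?e0 ?e1 ?e2.
Qed.

Lemma Pu_solves : solves_MEQ_AD Pu.
Proof.
split.
  by move=> l; case: l => [|[|[|l]]].
move=> x; have h := key _ _ _ (ltn_ord (x o0)) (ltn_ord (x o1)) (ltn_ord (x o2)).
split.
- move=> H.
  have H0 := H o0; have H1 := H o1; have H2 := H o2.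
  rewrite !Pu_out /= in H0 H1 H2.
  move/negbFE: H0; move/negbFE: H1; move/negbFE: H2 => e2 e1 e0.
  move: h; rewrite /= e0 e1 e2 /= => h.
  case/andP: (esym h) => /eqP a01 /eqP a12.
  have E : forall i, x i = x o0.
    case=> [[|[|[|i]]] Hi] //.
    - by congr (x _); apply: val_inj.
    - apply/val_inj => /=; rewrite a01; congr (val (x _)); exact: val_inj.
    - apply/val_inj => /=; rewrite a01 a12; congr (val (x _)); exact: val_inj.
  by move=> i j; rewrite E (E j).
- move=> H i; rewrite Pu_out.
  case: i => [[|[|[|i]]] Hi] //=; apply/negbF/eqP; by rewrite ?(H o1 o0) ?(H o2 o0).
Qed.

Lemma msgf_lt l v : msgf l v < 3.
Proof. by case: l => [|[|l]] /=; rewrite ltn_mod. Qed.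

Lemma Pu_nvals l : l < 3 -> nvals Pu l = 3.
Proof.
move=> hl; apply/eqP; rewrite eqn_leq; apply/andP; split.
- apply: (@leq_trans (size [:: 0; 1; 2])) => //.
  apply: uniq_leq_size; first exact: undup_uniq.
  move=> y; rewrite mem_undup => /mapP [x _ ->].
  rewrite /symbol [len Pu]/= Pu_trans.
  have H : forall k, k < 3 -> k \in [:: 0; 1; 2] by case=> [|[|[|]]].
  by case: l hl => [|[|[|]]] //= _; apply: H; rewrite ltn_mod.
- apply: (@uniq_leq_size _ [:: 0; 1; 2]) => // k.
  rewrite !inE => /or3P [] /eqP -> ; rewrite mem_undup; apply/mapP;
  [exists [ffun _ => inord 0] | exists [ffun _ => inord 1] | exists [ffun _ => inord 2]];
  rewrite ?mem_enum //; rewrite /symbol [len Pu]/= Pu_trans !ffunE inordK //;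
  by case: l hl => [|[|[|]]].
Qed.

Lemma Pu_cost : cost Pu = log2 27.
Proof.
rewrite /cost; change (len Pu) with 3; rewrite !big_ord_recl big_ord0 /= !Pu_nvals //.
have h3 : (0 < INR 3)%R by apply: lt_0_INR; apply/ltP.
have h27 : (27 = INR 3 * INR 3 * INR 3)%R by simpl; ring.
rewrite /log2 h27 !ln_mult //; last by apply: Rmult_lt_0_compat.
unfold Rdiv; ring.
Qed.

(* C_AD(3,6) = log2 27, with the infimum unfolded: log2 27 is a lower bound
   on the cost of every solving protocol, and is approached arbitrarily closely. *)
Theorem mainTheorem8 :
  (forall P : protocol 3 6, solves_MEQ_AD P -> (log2 27 <= cost P)%R) /\
  (forall eps : R, (0 < eps)%R ->
     exists P : protocol 3 6, solves_MEQ_AD P /\ (cost P < log2 27 + eps)%R).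
Proof.
split.
- move=> P sol; rewrite cost_prod.
  have -> : (27 = INR 27)%R by rewrite INR_IZR_INZ.
  apply: log2_le => //; exact: lower.
- move=> eps he; exists Pu; split; first exact: Pu_solves.
  rewrite Pu_cost; lra.
Qed.
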